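(* Let $d\ge 1$, let $\Omega=\operatorname{diag}(\omega_j)_{j=1}^d\in\mathbb{R}^{d\times d}$ with all $\omega_j\ge 0$, and let $A\in\mathbb{C}^{d\times d}$ be self-adjoint. Let $0<h\le 1$ and let $\psi_1,\phi\colon\mathbb{R}\to\mathbb{R}$ be even functions such that $\psi_1(\xi)=\operatorname{sinc}(\xi)\phi(\xi)$ for all $\xi\in\mathbb{R}$ and, for constants $c_0,c_1\ge 0$, \[ |\psi_1(\xi)|\le c_0,\qquad |\phi(\xi)|\le c_0,\qquad |\phi(\xi)-1|\le c_1|\xi|\qquad\text{for all }\xi\in\mathbb{R}. \] Set $\Psi_1=\psi_1(h\Omega)$, $\Phi=\phi(h\Omega)$. For given $q_0,\dot q_0\in\mathbb{C}^d$, define $(q_n,\dot q_n)_{n\ge 0}$ recursively by \begin{align*} q_{n+1} &= \cos(h\Omega) q_n + h\operatorname{sinc}(h\Omega) \dot{q}_n - \tfrac12 h^2 \operatorname{sinc}(h\Omega) \Psi_1 A\Phi q_n,\\ \dot{q}_{n+1} &= -\Omega \sin(h\Omega) q_n + \cos(h\Omega) \dot{q}_n - \tfrac12 h \big( \cos(h\Omega) \Psi_1 A\Phi q_n + \Psi_1 A\Phi q_{n+1}\big). \end{align*} Then \[ \|\Omega q_n\| + \|\dot{q}_n\| \le C \qquad\text{for all } n\in\mathbb{N}, \] with a constant $C$ depending only on $c_0$, $\|A\|$, $\|q_0\|$, $\|\Omega q_0\|$, $\|\dot{q}_0\|$ and $\|q_n\|$.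
   Context: $\|\cdot\|$ is the Euclidean norm on $\mathbb{C}^d$ and, for matrices, the induced operator norm. $\operatorname{sinc}(\xi)=\sin(\xi)/\xi$ for $\xi\ne0$ and $\operatorname{sinc}(0)=1$. For a function $f\colon\mathbb{R}\to\mathbb{R}$, $f(h\Omega)$ denotes the diagonal matrix $\operatorname{diag}(f(h\omega_j))_{j=1}^d$. *)

(* Defs.v *)
From mathcomp Require Import all_boot all_algebra.
From mathcomp Require Import classical_sets reals trigo.
From mathcomp.real_closed Require Import complex.

Set Implicit Arguments. Unset Strict Implicit. Unset Printing Implicit Defensive.
Import GRing.Theory Num.Theory.
Local Open Scope ring_scope.
Local Open Scope classical_set_scope.

Section Defs.
Variable R : realType.

Definition sinc (x : R) : R := if x == 0 then 1 else sin x / x.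

Definition vnorm (d : nat) (v : 'cV[R[i]]_d) : R :=
  Num.sqrt (\sum_(j < d) (complex.Re (v j ord0) ^+ 2 + complex.Im (v j ord0) ^+ 2)).

Definition opnorm (d : nat) (A : 'M[R[i]]_d) : R :=
  sup [set vnorm (A *m x) | x in [set x : 'cV[R[i]]_d | vnorm x <= 1]].

Definition selfadjoint (d : nat) (A : 'M[R[i]]_d) : Prop :=
  (map_mx (@conjc R) A)^T = A.

Definition RtoC (x : R) : R[i] := Complex x 0.

(* f(h Omega) = diag(f(h w_j)) for Omega = diag(w_j) *)
Definition fdiag (d : nat) (w : 'I_d -> R) (f : R -> R) (h : R) : 'M[R[i]]_d :=
  diag_mx (\row_j RtoC (f (h * w j))).

Definition Omat (d : nat) (w : 'I_d -> R) : 'M[R[i]]_d :=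
  diag_mx (\row_j RtoC (w j)).

Definition step (d : nat) (w : 'I_d -> R) (A : 'M[R[i]]_d) (h : R)
    (psi1 phi : R -> R) (p : 'cV[R[i]]_d * 'cV[R[i]]_d)
    : 'cV[R[i]]_d * 'cV[R[i]]_d :=
  let q := p.1 in let qd := p.2 in
  let cosM := fdiag w cos h in
  let sinM := fdiag w sin h in
  let sincM := fdiag w sinc h in
  let Psi1 := fdiag w psi1 h in
  let Phi := fdiag w phi h in
  let Om := Omat w in
  let q' := cosM *m q + RtoC h *: (sincM *m qd)
            - RtoC (h ^+ 2 / 2) *: (sincM *m Psi1 *m A *m Phi *m q) in
  let qd' := - (Om *m sinM *m q) + cosM *m qd
            - RtoC (h / 2) *: (cosM *m Psi1 *m A *m Phi *m q
                                + Psi1 *m A *m Phi *m q') in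
  (q', qd').

Definition traj (d : nat) (w : 'I_d -> R) (A : 'M[R[i]]_d) (h : R)
    (psi1 phi : R -> R) (q0 qd0 : 'cV[R[i]]_d) (n : nat)
    : 'cV[R[i]]_d * 'cV[R[i]]_d :=
  iter n (step w A h psi1 phi) (q0, qd0).

End Defs.

(* Main.v *)
Require Import Defs.
From mathcomp Require Import all_boot all_order all_algebra.
From mathcomp Require Import classical_sets reals trigo.
From mathcomp.real_closed Require Import complex.
From mathcomp Require Import ring lra.
Import Order.TTheory GRing.Theory Num.Theory.
Local Open Scope ring_scope.

Section Aux.
Variable R : realType.
Local Notation C := (R[i]).
Local Notation re := (@complex.Re R).
Local Notation im := (@complex.Im R).

Lemma reD (x y : C) : re (x + y) = re x + re y. Proof. by case: x; case: y. Qed.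
Lemma imD (x y : C) : im (x + y) = im x + im y. Proof. by case: x; case: y. Qed.
Lemma reN (x : C) : re (- x) = - re x. Proof. by case: x. Qed.
Lemma imN (x : C) : im (- x) = - im x. Proof. by case: x. Qed.
Lemma reM (x y : C) : re (x * y) = re x * re y - im x * im y.
Proof. by case: x => a b; case: y => c e. Qed.
Lemma imM (x y : C) : im (x * y) = re x * im y + im x * re y.
Proof. by case: x => a b; case: y => c e. Qed.
Lemma reR a : re (RtoC a) = a. Proof. by []. Qed.
Lemma imR a : im (RtoC a) = 0. Proof. by []. Qed.
Lemma re0 : re 0 = 0. Proof. by []. Qed.
Lemma im0 : im 0 = 0. Proof. by []. Qed.
Lemma reC (x : C) : re (x^*)%C = re x. Proof. by case: x. Qed.
Lemma imC (x : C) : im (x^*)%C = - im x. Proof. by case: x. Qed.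
Lemma resum n (F : 'I_n -> C) : re (\sum_j F j) = \sum_j re (F j).
Proof. by elim/big_ind2: _ => // a b c e H1 H2; rewrite reD H1 H2. Qed.
Lemma imsum n (F : 'I_n -> C) : im (\sum_j F j) = \sum_j im (F j).
Proof. by elim/big_ind2: _ => // a b c e H1 H2; rewrite imD H1 H2. Qed.
Lemma RtoCE a : RtoC a = real_complex R a. Proof. by []. Qed.
Lemma ceq (x y : C) : re x = re y -> im x = im y -> x = y.
Proof. by case: x => a b; case: y => c e /= -> ->. Qed.

Definition cre := (reD, imD, reN, imN, reM, imM, reR, imR, re0, im0, reC, imC).

Lemma fdiag_mulE d (w : 'I_d -> R) f h (x : 'cV[C]_d) j k :
  (fdiag w f h *m x) j k = RtoC (f (h * w j)) * x j k.
Proof. by rewrite /fdiag mul_diag_mx !mxE. Qed.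
Lemma Omat_mulE d (w : 'I_d -> R) (x : 'cV[C]_d) j k :
  (Omat w *m x) j k = RtoC (w j) * x j k.
Proof. by rewrite /Omat mul_diag_mx !mxE. Qed.
End Aux.

Section V.
Variable R : realType.
Local Notation C := (R[i]).
Local Notation re := (@complex.Re R).
Local Notation im := (@complex.Im R).
Variable d : nat.
Local Notation V := 'cV[C]_d.

Definition Rip (x y : V) : R := \sum_j (re (x j 0) * re (y j 0) + im (x j 0) * im (y j 0)).
Definition N (x : V) : R := \sum_j (re (x j 0) ^+ 2 + im (x j 0) ^+ 2).

Lemma vnormE (x : V) : vnorm x = Num.sqrt (N x). Proof. by []. Qed.
Lemma N_ge0 x : 0 <= N x.
Proof. by apply: sumr_ge0 => j _; rewrite addr_ge0 // sqr_ge0. Qed.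
Lemma vnorm_sq x : vnorm x ^+ 2 = N x.
Proof. by rewrite vnormE sqr_sqrtr // N_ge0. Qed.

Lemma Rip_re x y : Rip x y = re (\sum_j ((x j 0)^*)%C * y j 0).
Proof. by rewrite resum; apply: eq_bigr => j _; rewrite !cre; ring. Qed.

Lemma RipC x y : Rip x y = Rip y x.
Proof. by apply: eq_bigr => j _; ring. Qed.

Lemma Rip_herm (A : 'M[C]_d) x y : selfadjoint A ->
  Rip x (A *m y) = Rip (A *m x) y.
Proof.
move=> hA; have hA' i j : A i j = ((A j i)^*)%C.
  by have := congr1 (fun M : 'M[C]_d => M i j) hA; rewrite !mxE => <-.
rewrite !Rip_re; congr re.
under eq_bigr => i _ do rewrite mxE big_distrr /=.
under [RHS]eq_bigr => i _ do rewrite mxE rmorph_sum big_distrl /=.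
rewrite exchange_big /=; apply: eq_bigr => i _; apply: eq_bigr => j _.
rewrite rmorphM /= hA'; ring.
Qed.
End V.
Arguments Rip {R d}.
Arguments N {R d}.

Section Real.
Variable R : realType.
Lemma rot_id (c s om t a x : R) : c^+2 + s^+2 = 1 -> om * t = s ->
  (-(om*(s*a)) + c*x)^+2 + (om*(c*a + t*x))^+2 = x^+2 + (om*a)^+2.
Proof.
move=> H1 H2; rewrite -H2 in H1 *.
have H : (c^+2 + (om*t)^+2 - 1) * ((om*a)^+2 + x^+2) = 0 by rewrite H1 subrr mul0r.
apply/eqP; rewrite -subr_eq0 -H; apply/eqP; ring.
Qed.
Lemma inv_id (c s om t a x g : R) : c^+2 + s^+2 = 1 -> om * t = s ->
  t*((-(om*(s*a)) + c*x)*g) = (c*(c*a + t*x))*g - a*g.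
Proof.
move=> H1 H2; rewrite -H2 in H1 *.
have H : (c^+2 + (om*t)^+2 - 1) * (a*g) = 0 by rewrite H1 subrr mul0r.
apply/eqP; rewrite -subr_eq0 -oppr0 -H; apply/eqP; ring.
Qed.
Lemma sinc_id (h om : R) : 0 < h -> om * (h * sinc (h * om)) = sin (h * om).
Proof.
move=> hh; rewrite /sinc; case: eqP => [E|NE].
  have om0 : om = 0 by move/eqP: E; rewrite mulf_eq0 (gt_eqF hh) /= => /eqP.
  by rewrite om0 mulr0 sin0 mul0r.
have hn : h != 0 by rewrite (gt_eqF hh).
have on : om != 0 by apply/eqP => E; apply: NE; rewrite E mulr0.
by field; rewrite on hn.
Qed.
End Real.
Arguments rot_id {R}.
Arguments inv_id {R}.
Arguments sinc_id {R}.

Section Main.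
Variable R : realType.
Local Notation C := (R[i]).
Local Notation re := (@complex.Re R).
Local Notation im := (@complex.Im R).
Variable d : nat.
Local Notation V := 'cV[C]_d.
Variables (w : 'I_d -> R) (A : 'M[C]_d) (h : R) (psi1 phi : R -> R).
Hypothesis hA : selfadjoint A.
Hypothesis hh : 0 < h.
Hypothesis hs : forall x, psi1 x = sinc x * phi x.

Local Notation Cm := (fdiag w cos h).
Local Notation Sm := (fdiag w sin h).
Local Notation Sc := (fdiag w (@sinc R) h).
Local Notation Ps := (fdiag w psi1 h).
Local Notation Ph := (fdiag w phi h).
Local Notation Om := (Omat w).

Definition G (x : V) : V := Ph *m (A *m (Ph *m x)).

Lemma PsE (x : V) : Ps *m x = Sc *m (Ph *m x).
Proof.
apply/matrixP => i k; rewrite !fdiag_mulE hs.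
by apply: ceq; rewrite !cre; ring.
Qed.

Definition q1 (q p : V) : V :=
  Cm *m q + RtoC h *: (Sc *m (p - RtoC (h/2) *: (Sc *m G q))).
Definition p1 (q p : V) : V :=
  - (Om *m (Sm *m q)) + Cm *m (p - RtoC (h/2) *: (Sc *m G q))
  - RtoC (h/2) *: (Sc *m G (q1 q p)).

Ltac comp := apply/matrixP => i k; rewrite !(fdiag_mulE, Omat_mulE, mxE);
  apply: ceq; rewrite !cre /=; ring.

Lemma stepE q p : step w A h psi1 phi (q, p) = (q1 q p, p1 q p).
Proof.
have E1 : Cm *m q + RtoC h *: (Sc *m p) - RtoC (h ^+ 2 / 2) *: (Sc *m Ps *m A *m Ph *m q) = q1 q p.
  rewrite -!mulmxA PsE /q1 /G; move: (Ph *m (A *m (Ph *m q))) => g; comp.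
rewrite /step /= E1; congr pair.
rewrite -!mulmxA !PsE /p1 /G; move: (Ph *m (A *m (Ph *m q))) => g.
move: (Ph *m (A *m (Ph *m q1 q p))) => g1; comp.
Qed.

Ltac sums := rewrite /N /Rip ?mulr_sumr -?sumrN -?big_split /=; apply: eq_bigr => j _;
  rewrite !(fdiag_mulE, Omat_mulE, mxE) !cre /=.

Lemma Fa (u v : V) (k : R) :
  N (u - RtoC k *: v) = N u - 2 * k * Rip u v + k ^+ 2 * N v.
Proof. sums; ring. Qed.
Lemma Fb (u v : V) (k : R) :
  N u = N (u - RtoC k *: v) + 2 * k * Rip (u - RtoC k *: v) v + k ^+ 2 * N v.
Proof. sums; ring. Qed.
Lemma trig j : cos (h * w j) ^+ 2 + sin (h * w j) ^+ 2 = 1.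
Proof. exact: cos2Dsin2. Qed.
Lemma Fc (q pp : V) :
  N (-(Om *m (Sm *m q)) + Cm *m pp) + N (Om *m (Cm *m q + RtoC h *: (Sc *m pp)))
  = N pp + N (Om *m q).
Proof.
sums.
have T2 := sinc_id h (w j) hh.
have := rot_id _ _ _ _ (re (q j 0)) (re (pp j 0)) (trig j) T2.
have := rot_id _ _ _ _ (im (q j 0)) (im (pp j 0)) (trig j) T2.
lra.
Qed.
Lemma Fd (q pp g : V) :
  h * Rip pp (Sc *m g) = Rip (Cm *m q + RtoC h *: (Sc *m pp)) g - Rip (Cm *m q) g.
Proof. sums; ring. Qed.
Lemma Fe (q pp g : V) :
  h * Rip (-(Om *m (Sm *m q)) + Cm *m pp) (Sc *m g)
  = Rip (Cm *m (Cm *m q + RtoC h *: (Sc *m pp))) g - Rip q g.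
Proof.
sums.
have T2 := sinc_id h (w j) hh.
have := inv_id _ _ _ _ (re (q j 0)) (re (pp j 0)) (re (g j 0)) (trig j) T2.
have := inv_id _ _ _ _ (im (q j 0)) (im (pp j 0)) (im (g j 0)) (trig j) T2.
lra.
Qed.
Lemma Rip_diag f (x y : V) : Rip x (fdiag w f h *m y) = Rip (fdiag w f h *m x) y.
Proof. sums; ring. Qed.
Lemma Ff (x y : V) : Rip x (G y) = Rip y (G x).
Proof.
rewrite /G (Rip_diag phi x (A *m (Ph *m y))) (@Rip_herm R d A _ _ hA) RipC.
by rewrite -(Rip_diag phi y (A *m (Ph *m x))).
Qed.

Lemma comb (hh' Np Npp n3 n4 n5 m1 m2 r1 r2 r3 r4 r5 r6 : R) :
  Np = Npp + 2 * (hh' / 2) * r5 + (hh' / 2) ^+ 2 * m1 ->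
  n5 + n4 = Npp + n3 ->
  hh' * r5 = r4 - r1 ->
  hh' * r6 = r2 - r3 ->
  r3 = r4 ->
  n5 - 2 * (hh' / 2) * r6 + (hh' / 2) ^+ 2 * m2 + n4 + r2 - hh' ^+ 2 / 4 * m2
  = Np + n3 + r1 - hh' ^+ 2 / 4 * m1.
Proof. move=> Hb Hc Hd He Hf; rewrite Hb; lra. Qed.

Definition En (q p : V) : R :=
  N p + N (Om *m q) + Rip (Cm *m q) (G q) - h ^+ 2 / 4 * N (Sc *m G q).

Lemma En_step q p : En (q1 q p) (p1 q p) = En q p.
Proof.
set pp := p - RtoC (h/2) *: (Sc *m G q).
have Ha := Fa (-(Om *m (Sm *m q)) + Cm *m pp) (Sc *m G (q1 q p)) (h/2).
have Hb := Fb p (Sc *m G q) (h/2).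
have Hc := Fc q pp.
have Hd := Fd q pp (G q).
have He := Fe q pp (G (q1 q p)).
have Hf := Ff q (q1 q p).
rewrite -[Cm *m q + RtoC h *: (Sc *m pp)]/(q1 q p) in Hc Hd He.
rewrite /En /p1 -/pp Ha.
rewrite -/pp in Hb.
move: Hb Hc Hd He Hf. apply: comb.
Qed.

Lemma N_diag_le f m (x : V) : (forall j, f (h * w j) ^+ 2 <= m) ->
  N (fdiag w f h *m x) <= m * N x.
Proof.
move=> H; rewrite /N mulr_sumr; apply: ler_sum => j _.
rewrite !(fdiag_mulE, mxE) !cre /=.
have -> : (f (h * w j) * re (x j 0) - 0 * im (x j 0)) ^+ 2 +
   (f (h * w j) * im (x j 0) + 0 * re (x j 0)) ^+ 2
   = f (h * w j) ^+ 2 * (re (x j 0) ^+ 2 + im (x j 0) ^+ 2) by ring.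
by rewrite ler_wpM2r // addr_ge0 // sqr_ge0.
Qed.
End Main.

Section Op.
Variable R : realType.
Local Notation C := (R[i]).
Local Notation re := (@complex.Re R).
Local Notation im := (@complex.Im R).
Variable d : nat.
Local Notation V := 'cV[C]_d.
Variable A : 'M[C]_d.

Lemma N_term (x : V) j : re (x j 0) ^+ 2 + im (x j 0) ^+ 2 <= N x.
Proof.
rewrite /N (bigD1 j) //= lerDl; apply: sumr_ge0 => i _.
by rewrite addr_ge0 // sqr_ge0.
Qed.

Lemma N_scale (x : V) k : N (RtoC k *: x) = k ^+ 2 * N x.
Proof. rewrite /N mulr_sumr; apply: eq_bigr => j _; rewrite !mxE !cre; ring. Qed.

Lemma N0 : N (0 : V) = 0.
Proof. by rewrite /N big1 // => j _; rewrite mxE !cre expr0n /= addr0. Qed.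

Lemma N_eq0 (x : V) : N x = 0 -> x = 0.
Proof.
move=> H; apply/matrixP => j k; rewrite (ord1 k) [RHS]mxE.
have := N_term x j; rewrite H => Hj.
have h1 : re (x j 0) = 0 by nra.
have h2 : im (x j 0) = 0 by nra.
by apply: ceq; rewrite ?h1 ?h2.
Qed.

Definition Mrow i := \sum_j (`|re (A i j)| + `|im (A i j)|).
Definition Bd := \sum_i 2 * Mrow i ^+ 2.

Lemma term_bd (a z : C) : `|re z| <= 1 -> `|im z| <= 1 ->
  `|re (a * z)| <= `|re a| + `|im a| /\ `|im (a * z)| <= `|re a| + `|im a|.
Proof.
rewrite reM imM !ler_norml => /andP[h1 h2] /andP[h3 h4].
have := ler_norm (re a); have := ler_norm (im a).
have := ler_norm (- re a); have := ler_norm (- im a); rewrite !normrN => h5 h6 h7 h8.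
split; apply/andP; split; nra.
Qed.

Lemma sq_bd (r M : R) : `|r| <= M -> r ^+ 2 <= M ^+ 2.
Proof. rewrite ler_norml => /andP[h1 h2]; nra. Qed.

Lemma NA_bd (x : V) : N x <= 1 -> N (A *m x) <= Bd.
Proof.
move=> Hx; rewrite /N /Bd; apply: ler_sum => i _.
have Hc j : `|re (x j 0)| <= 1 /\ `|im (x j 0)| <= 1.
  have := N_term x j => Hj; rewrite !ler_norml; split; apply/andP; split; nra.
rewrite mxE resum imsum.
have H1 : `|\sum_j re (A i j * x j 0)| <= Mrow i.
  apply: le_trans (ler_norm_sum _ _ _) _; apply: ler_sum => j _.
  by case: (Hc j) => a b; case: (term_bd (A i j) (x j 0) a b).
have H2 : `|\sum_j im (A i j * x j 0)| <= Mrow i.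
  apply: le_trans (ler_norm_sum _ _ _) _; apply: ler_sum => j _.
  by case: (Hc j) => a b; case: (term_bd (A i j) (x j 0) a b).
have := sq_bd _ _ H1; have := sq_bd _ _ H2; lra.
Qed.

Lemma vnorm_le1 (x : V) : vnorm x <= 1 -> N x <= 1.
Proof. move=> H; rewrite -vnorm_sq; have := sqrtr_ge0 (N x); rewrite -vnormE; nra. Qed.

Lemma op_ub : has_ubound [set vnorm (A *m x) | x in [set x : V | vnorm x <= 1]].
Proof.
exists (Num.sqrt Bd) => r [x Hx <-]; rewrite vnormE.
by apply: ler_wsqrtr; apply: NA_bd; apply: vnorm_le1.
Qed.

Lemma op_le (x : V) : vnorm x <= 1 -> vnorm (A *m x) <= opnorm A.
Proof. by move=> Hx; apply: (ub_le_sup op_ub); exists x. Qed.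

Lemma opnorm_ge0 : 0 <= opnorm A.
Proof.
apply: le_trans (op_le (0 : V) _); first by rewrite mulmx0 vnormE N0 sqrtr0.
by rewrite vnormE N0 sqrtr0.
Qed.

Lemma NA_op (x : V) : N (A *m x) <= opnorm A ^+ 2 * N x.
Proof.
have [/N_eq0 ->|Nx] := eqVneq (N x) 0.
  have Z (y : V) : y = 0 -> N y = 0 by move=> ->; exact: N0.
  by rewrite (Z (A *m 0)) ?mulmx0 // (Z 0) // mulr0.
have Npos : 0 < N x by rewrite lt_def Nx N_ge0.
set t := Num.sqrt (N x).
have tpos : 0 < t by rewrite sqrtr_gt0.
have t2 : t ^+ 2 = N x by rewrite sqr_sqrtr // N_ge0.
set u := t^-1.
have tu : t * u = 1 by rewrite mulfV // gt_eqF.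
have Ny : N (RtoC u *: x) = 1 by rewrite N_scale -t2 -exprMn mulrC tu expr1n.
have := op_le (RtoC u *: x); rewrite vnormE Ny sqrtr1 lexx => /(_ isT).
rewrite -scalemxAr vnormE N_scale => Hle.
have := sqrtr_ge0 (u ^+ 2 * N (A *m x)) => H0.
have H3 : u ^+ 2 * N (A *m x) <= opnorm A ^+ 2.
  have P : 0 <= u ^+ 2 * N (A *m x) by rewrite mulr_ge0 ?sqr_ge0 ?N_ge0.
  rewrite -(sqr_sqrtr P); move: (Num.sqrt _) H0 Hle => s; nra.
have -> : N (A *m x) = t ^+ 2 * (u ^+ 2 * N (A *m x)) by rewrite mulrA -exprMn tu expr1n mul1r.
by rewrite t2 mulrC ler_wpM2r // N_ge0.
Qed.
End Op.

Lemma Rip_le (R : realType) d (x y : 'cV[R[i]]_d) :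
  2 * Rip x y <= N x + N y /\ - (N x + N y) <= 2 * Rip x y.
Proof.
split.
  rewrite /Rip /N mulr_sumr -big_split; apply: ler_sum => j _ /=.
  have := sqr_ge0 (complex.Re (x j 0) - complex.Re (y j 0)).
  have := sqr_ge0 (complex.Im (x j 0) - complex.Im (y j 0)); nra.
rewrite /Rip /N mulr_sumr -big_split -sumrN; apply: ler_sum => j _ /=.
have := sqr_ge0 (complex.Re (x j 0) + complex.Re (y j 0)).
have := sqr_ge0 (complex.Im (x j 0) + complex.Im (y j 0)); nra.
Qed.

Lemma bnd_real (R : realType) (np nom nq ncq ng nb hb r c : R) :
  ncq <= 1 * nq -> ng <= c * nq -> nb <= c * nq -> 2 * r <= ncq + ng ->
  - (ncq + ng) <= 2 * r -> hb <= 1 / 4 * nb -> 0 <= hb -> 0 <= nb ->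
  and (np + nom - ((1 + c) / 2 + c / 4) * nq <= np + nom + r - hb)
  (np + nom + r - hb <= np + nom + ((1 + c) / 2 + c / 4) * nq).
Proof.
move=> H1 H2 H3 H4 H5 H6 H7 H8.
have H9 : 0 <= c * nq by lra.
split.
  lra.
lra.
Qed.

Lemma hb_real (R : realType) (h nb : R) : 0 < h -> h <= 1 -> 0 <= nb ->
  and (h ^+ 2 / 4 * nb <= 1 / 4 * nb) (0 <= h ^+ 2 / 4 * nb).
Proof.
move=> H1 H2 H3; have H4 : h ^+ 2 <= 1 by nra.
split; first by apply: ler_wpM2r => //; lra.
by rewrite mulr_ge0 // divr_ge0 // sqr_ge0.
Qed.

Lemma ht_real (R : realType) (np nom nq e e0 z y k n0 : R) :
  np + nom - k * nq <= e -> e = e0 -> e0 <= z + y + k * n0 ->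
  nom + np <= z + y + k * (n0 + nq).
Proof. by move=> *; lra. Qed.

Lemma fin_real (R : realType) (a b T : R) : 0 <= a -> 0 <= b -> a + b <= T ->
  Num.sqrt a + Num.sqrt b <= 2 * Num.sqrt T.
Proof.
move=> a0 b0 H.
have s1 : Num.sqrt a <= Num.sqrt T by apply: ler_wsqrtr; lra.
have s2 : Num.sqrt b <= Num.sqrt T by apply: ler_wsqrtr; lra.
lra.
Qed.

Theorem lemma3 (R : realType) :
  exists C : R -> R -> R -> R -> R -> R -> R,
  forall (d : nat) (w : 'I_d -> R) (A : 'M[R[i]]_d) (h : R)
         (psi1 phi : R -> R) (c0 c1 : R) (q0 qd0 : 'cV[R[i]]_d),
    (0 < d)%N ->
    (forall j, 0 <= w j) ->
    selfadjoint A ->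
    0 < h -> h <= 1 ->
    (forall x, psi1 (- x) = psi1 x) ->
    (forall x, phi (- x) = phi x) ->
    (forall x, psi1 x = sinc x * phi x) ->
    0 <= c0 -> 0 <= c1 ->
    (forall x, `|psi1 x| <= c0) ->
    (forall x, `|phi x| <= c0) ->
    (forall x, `|phi x - 1| <= c1 * `|x|) ->
    forall n : nat,
      vnorm (Omat w *m (traj w A h psi1 phi q0 qd0 n).1)
        + vnorm (traj w A h psi1 phi q0 qd0 n).2
      <= C c0 (opnorm A) (vnorm q0) (vnorm (Omat w *m q0)) (vnorm qd0)
           (vnorm (traj w A h psi1 phi q0 qd0 n).1).
Proof.
pose K (c0 a : R) := (1 + c0 ^+ 4 * a ^+ 2) / 2 + c0 ^+ 4 * a ^+ 2 / 4.
exists (fun c0 a x0 y0 z0 xn =>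
  2 * Num.sqrt (z0 ^+ 2 + y0 ^+ 2 + K c0 a * (x0 ^+ 2 + xn ^+ 2))).
move=> d w A h psi1 phi c0 c1 q0 qd0 _ hw hA hh h1 _ _ hs hc0 _ hps hph _ n.
set a := opnorm A.
have a0 : 0 <= a := opnorm_ge0 _ _ A.
have Bph (y : 'cV[R[i]]_d) : N (fdiag w phi h *m y) <= c0 ^+ 2 * N y.
  by apply: N_diag_le => j; apply: sq_bd.
have Bps (y : 'cV[R[i]]_d) : N (fdiag w psi1 h *m y) <= c0 ^+ 2 * N y.
  by apply: N_diag_le => j; apply: sq_bd.
have BA (y : 'cV[R[i]]_d) : N (A *m y) <= a ^+ 2 * N y := NA_op _ _ A y.
have Bnd (q p : 'cV[R[i]]_d) :
  N p + N (Omat w *m q) - K c0 a * N q <= En R d w A h phi q p /\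
  En R d w A h phi q p <= N p + N (Omat w *m q) + K c0 a * N q.
  have B1 : N (fdiag w cos h *m q) <= 1 * N q.
    by apply: N_diag_le => j; rewrite -(expr1n _ 2); apply: sq_bd; apply: cos_max.
  have c2 : 0 <= c0 ^+ 2 by rewrite sqr_ge0.
  have a2 : 0 <= a ^+ 2 by rewrite sqr_ge0.
  have chain (D : 'cV[R[i]]_d -> 'cV[R[i]]_d) :
      (forall y, N (D y) <= c0 ^+ 2 * N y) ->
      N (D (A *m (fdiag w phi h *m q))) <= c0 ^+ 4 * a ^+ 2 * N q.
    move=> HD; apply: le_trans (HD _) _.
    apply: le_trans (ler_wpM2l c2 (BA _)) _.
    apply: le_trans (ler_wpM2l c2 (ler_wpM2l a2 (Bph q))) _.
    by rewrite le_eqVlt; apply/orP; left; apply/eqP; ring.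
  have B2 : N (G R d w A h phi q) <= c0 ^+ 4 * a ^+ 2 * N q by apply: chain.
  have B3 : N (fdiag w (@sinc R) h *m G R d w A h phi q) <= c0 ^+ 4 * a ^+ 2 * N q.
    by rewrite /G -(PsE _ _ _ _ _ _ hs); apply: chain.
  have [R1 R2] := Rip_le _ _ (fdiag w cos h *m q) (G R d w A h phi q).
  have Nb0 := N_ge0 _ _ (fdiag w (@sinc R) h *m G R d w A h phi q).
  have [Hb Hb0] := hb_real _ _ _ hh h1 Nb0.
  rewrite /En /K; exact: bnd_real _ _ _ _ _ _ _ _ _ _ B1 B2 B3 R1 R2 Hb Hb0 Nb0.
have Inv : En R d w A h phi (traj w A h psi1 phi q0 qd0 n).1
             (traj w A h psi1 phi q0 qd0 n).2 = En R d w A h phi q0 qd0.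
  elim: n => [//|n IH]; rewrite /traj iterS; move: IH; rewrite /traj.
  case: (iter n _ _) => q p IH.
  by rewrite (stepE _ _ _ _ _ _ _ hs) /= (En_step _ _ _ _ _ _ hA hh).
move: Inv; set q := (traj _ _ _ _ _ _ _ _).1; set p := (traj _ _ _ _ _ _ _ _).2 => Inv.
have [L1 _] := Bnd q p.
have [_ L2] := Bnd q0 qd0.
cbv beta; rewrite !vnorm_sq !vnormE.
apply: (fin_real _ (N (Omat w *m q)) (N p) (N qd0 + N (Omat w *m q0) + K c0 a * (N q0 + N q))).
- exact: N_ge0.
- exact: N_ge0.
- exact: ht_real _ _ _ _ _ _ _ _ _ _ L1 Inv L2.
Qed.
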